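(* Let $\gamma\in\{0\}\cup(0,\infty)\cup\{\infty\}$. The minimum of the convex relaxed problem $\min_{u\in\mathcal{B}'}\ \sum_{i=1}^n\sum_{x\in V}C_i(x)u_i(x)+\sum_{i=1}^n TV_w(u_i)$ — with no size information if $\gamma=0$, with the penalty term $\sum_{i=1}^nP_\gamma(\|u_i\|)$ added to the energy if $0<\gamma<\infty$, and subject to the size constraints $S_i^\ell\le\|u_i\|\le S_i^u$ for all $i$ if $\gamma=\infty$ — equals the value of the dual problem $$\sup_{q,\rho^1,\rho^2}\ \sum_{x\in V}\min_{i\in I}\Big(C_i(x)+(\mathrm{div}_w q_i)(x)+\rho_i^2-\rho_i^1\Big)+\sum_{i=1}^n\big(\rho_i^1S_i^\ell-\rho_i^2S_i^u\big),$$ subject to $(q_1,\dots,q_n)\in S^n_\infty$ and $\rho_i^1,\rho_i^2\in[0,\gamma]$ for $i=1,\dots,n$ (where $[0,\infty]$ means $[0,\infty)$); i.e. the relaxed problem can equivalently be formulated as this dual problem.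
   Context: Let $G=(V,E)$ be a finite undirected graph with symmetric weights $w(x,y)=w(y,x)>0$ for $\{x,y\}\in E$ and $w(x,y)=0$ otherwise. For $v:V\to\mathbb{R}$, $TV_w(v)=\frac12\sum_{x,y\in V}w(x,y)|v(y)-v(x)|$. For $\phi:V\times V\to\mathbb{R}$, the divergence is $(\mathrm{div}_w\phi)(x)=\frac12\sum_{y\in V}w(x,y)(\phi(x,y)-\phi(y,x))$ and $\|\phi\|_{\infty}=\max_{x,y\in V}|\phi(x,y)|$. $S^n_\infty=\{(q_1,\dots,q_n):\ q_i:V\times V\to\mathbb{R},\ \|q_i\|_\infty\le1\ \forall i\}$. Let $n\ge2$, $I=\{1,\dots,n\}$, $C_i:V\to\mathbb{R}$ given. For $u=(u_1,\dots,u_n):V\to\mathbb{R}^n$, $\|u_i\|=\sum_{x\in V}u_i(x)$. $\mathcal{B}'=\{u:V\to[0,1]^n:\sum_iu_i(x)=1\ \forall x\}$. Size bounds are integers $0\le S_i^\ell\le S_i^u$ with $\sum_iS_i^\ell\le|V|\le\sum_iS_i^u$. For $0<\gamma<\infty$, $P_\gamma(t)=0$ if $S_i^\ell\le t\le S_i^u$, $\gamma(t-S_i^u)$ if $t>S_i^u$, $\gamma(S_i^\ell-t)$ if $t<S_i^\ell$. *)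

(* Defs.v *)
From HB Require Import structures.
From mathcomp Require Import all_boot all_order all_algebra.
From mathcomp Require Import reals.
Set Implicit Arguments. Unset Strict Implicit. Unset Printing Implicit Defensive.
Import Order.TTheory GRing.Theory Num.Theory.
Local Open Scope ring_scope.

Section Defs.
Variable R : realType.
Variable V : finType.

Definition TVw (w : V -> V -> R) (v : V -> R) : R :=
  2^-1 * \sum_(x : V) \sum_(y : V) w x y * `|v y - v x|.

Definition divw (w : V -> V -> R) (phi : V -> V -> R) (x : V) : R :=
  2^-1 * \sum_(y : V) w x y * (phi x y - phi y x).

Definition supnorm_le1 (phi : V -> V -> R) : Prop :=
  forall x y, `|phi x y| <= 1.

Definition msize (v : V -> R) : R := \sum_(x : V) v x.

(* minimum over a finite index type (0 if empty; never used when empty) *)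
Definition minI (I : finType) (f : I -> R) : R :=
  if [pick i : I] is Some i0 then \big[Num.min/f i0]_(i : I) f i else 0.

Definition Pgam (g : R) (Sl Su : nat) (t : R) : R :=
  if (Sl%:R <= t) && (t <= Su%:R) then 0
  else if Su%:R < t then g * (t - Su%:R)
  else g * (Sl%:R - t).

End Defs.

Inductive gam (R : realType) : Type :=
  | gZero : gam R
  | gFin : R -> gam R
  | gInf : gam R.
Arguments gZero {R}. Arguments gInf {R}.

Section Problem.
Variable R : realType.
Variable V : finType.
Variable n : nat.
Variable w : V -> V -> R.
Variable C : 'I_n -> V -> R.
Variables Sl Su : 'I_n -> nat.
Variable gamma : gam R.

Definition inB' (u : 'I_n -> V -> R) : Prop :=
  (forall i x, 0 <= u i x <= 1) /\ (forall x, \sum_(i < n) u i x = 1).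

Definition primal_feasible (u : 'I_n -> V -> R) : Prop :=
  inB' u /\
  (match gamma with
   | gInf => forall i, (Sl i)%:R <= msize (u i) <= (Su i)%:R
   | _ => True
   end).

Definition primal_energy (u : 'I_n -> V -> R) : R :=
  \sum_(i < n) \sum_(x : V) C i x * u i x + \sum_(i < n) TVw w (u i) +
  (match gamma with
   | gFin g => \sum_(i < n) Pgam g (Sl i) (Su i) (msize (u i))
   | _ => 0
   end).

Definition in_0_gamma (r : R) : Prop :=
  match gamma with
  | gZero => r = 0
  | gFin g => 0 <= r <= g
  | gInf => 0 <= r
  end.

Definition dual_feasible (q : 'I_n -> V -> V -> R) (rho1 rho2 : 'I_n -> R) : Prop :=
  (forall i, supnorm_le1 (q i)) /\
  (forall i, in_0_gamma (rho1 i) /\ in_0_gamma (rho2 i)).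

Definition dual_value (q : 'I_n -> V -> V -> R) (rho1 rho2 : 'I_n -> R) : R :=
  \sum_(x : V) minI (fun i : 'I_n => C i x + divw w (q i) x + rho2 i - rho1 i) +
  \sum_(i < n) (rho1 i * (Sl i)%:R - rho2 i * (Su i)%:R).

End Problem.

(* Main.v *)
Require Import Defs.
From HB Require Import structures.
From mathcomp Require Import all_boot all_order all_algebra.
From mathcomp Require Import reals.
From mathcomp Require Import ring lra.
Set Implicit Arguments. Unset Strict Implicit. Unset Printing Implicit Defensive.
Import Order.TTheory GRing.Theory Num.Theory.
Local Open Scope ring_scope.

Section FM.
Variable R : realFieldType.
Variable X : finType.

Definition form := ({ffun X -> R} * R)%type.
Definition eval (f : form) (x : X -> R) : R := \sum_i f.1 i * x i - f.2.
Definition sat (s : seq form) (x : X -> R) := forall f, f \in s -> eval f x <= 0.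
Definition upd (x : X -> R) (v : X) (t : R) : X -> R :=
  fun i => if i == v then t else x i.

Lemma eval_upd f x v t : eval f (upd x v t) = f.1 v * t + eval f (upd x v 0).
Proof.
have E : forall t', \sum_i f.1 i * upd x v t' i =
   f.1 v * t' + \sum_(i | i != v) f.1 i * x i.
  move=> t'; rewrite (bigD1 v) //= /upd eqxx; congr (_ + _).
  by apply: eq_bigr => i /negbTE ->.
by rewrite /eval !E mulr0 add0r addrA.
Qed.

Lemma eval_upd_self f x v : eval f (upd x v (x v)) = eval f x.
Proof.
by rewrite /eval /upd; congr (_ - _); apply: eq_bigr => i _; case: eqP => // ->.
Qed.

Definition comb (c1 : R) (f1 : form) (c2 : R) (f2 : form) : form :=
  ([ffun i => c1 * f1.1 i + c2 * f2.1 i], c1 * f1.2 + c2 * f2.2).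

Lemma eval_comb c1 f1 c2 f2 x :
  eval (comb c1 f1 c2 f2) x = c1 * eval f1 x + c2 * eval f2 x.
Proof.
rewrite /eval /=; under eq_bigr do rewrite ffunE mulrDl -!mulrA.
rewrite big_split /= -!mulr_sumr; ring.
Qed.

Lemma comb1 f : comb 1 f 0 f = f.
Proof.
case: f => a b; rewrite /comb /=; congr pair; last by ring.
by apply/ffunP => i; rewrite ffunE /=; ring.
Qed.

Definition fm (v : X) (s : seq form) : seq form :=
  [seq f <- s | (f : form).1 v == 0] ++
  [seq comb (- (n : form).1 v) p ((p : form).1 v) n
     | p <- [seq f <- s | 0 < (f : form).1 v],
       n <- [seq f <- s | (f : form).1 v < 0]].

Lemma fm_zero v s f : f \in fm v s -> f.1 v = 0.
Proof.
rewrite mem_cat => /orP [|/allpairsP [[p n] [_ _ ->]]].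
  by rewrite mem_filter => /andP [/eqP].
by rewrite /= ffunE; ring.
Qed.

Lemma fm_comb v s f : f \in fm v s ->
  exists c1 f1 c2 f2, [/\ 0 <= c1, 0 <= c2, f1 \in s, f2 \in s &
                       f = comb c1 f1 c2 f2].
Proof.
rewrite mem_cat => /orP [|/allpairsP [[p n] [/= Hp Hn ->]]].
  rewrite mem_filter => /andP [_ Hf]; exists 1, f, 0, f.
  by rewrite comb1 ler01 lexx.
move: Hp Hn; rewrite !mem_filter => /andP [Hp Hps] /andP [Hn Hns].
exists (- n.1 v), p, (p.1 v), n; split => //.
  by rewrite oppr_ge0 ltW.
by rewrite ltW.
Qed.

Lemma ex_below (Us : seq R) : exists t, forall u, u \in Us -> t <= u.
Proof.
elim: Us => [|u Us [t Ht]]; first by exists 0.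
exists (Num.min u t) => u'; rewrite inE => /orP [/eqP ->|/Ht H].
  by rewrite ge_min lexx.
by rewrite ge_min H orbT.
Qed.

Lemma ex_between (Ls Us : seq R) :
  (forall l u, l \in Ls -> u \in Us -> l <= u) ->
  exists t, (forall l, l \in Ls -> l <= t) /\ (forall u, u \in Us -> t <= u).
Proof.
elim: Ls => [|l Ls IH] H.
  by have [t Ht] := ex_below Us; exists t; split.
have [|t [Ht1 Ht2]] := IH.
  by move=> l' u Hl Hu; apply: H => //; rewrite inE Hl orbT.
exists (Num.max l t); split.
  move=> l'; rewrite inE => /orP [/eqP ->|/Ht1 H'].
    by rewrite le_max lexx.
  by rewrite le_max H' orbT.
move=> u Hu; rewrite ge_max Ht2 // andbT; apply: H => //.
by rewrite inE eqxx.
Qed.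

Lemma fm_proj v s x : sat (fm v s) x -> exists t, sat s (upd x v t).
Proof.
move=> Hs.
pose rest f := eval f (upd x v 0).
pose Ls := [seq - rest f / (f : form).1 v | f <- [seq f <- s | (f : form).1 v < 0]].
pose Us := [seq - rest f / (f : form).1 v | f <- [seq f <- s | 0 < (f : form).1 v]].
have [|t [Ht1 Ht2]] := ex_between (Ls := Ls) (Us := Us).
  move=> l u /mapP [n Hn ->] /mapP [p Hp ->].
  have Hc : comb (- n.1 v) p (p.1 v) n \in fm v s.
    by rewrite mem_cat; apply/orP; right; apply/allpairsP; exists (p, n).
  have := Hs _ Hc.
  rewrite -(eval_upd_self _ _ v) eval_upd (fm_zero Hc) mul0r add0r eval_comb -/(rest p) -/(rest n).
  move: Hn Hp; rewrite !mem_filter => /andP [Hn _] /andP [Hp _] H.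
  rewrite ler_ndivrMr // mulrAC ler_pdivrMr // -subr_ge0.
  move: H; move: (rest p) (rest n) (p.1 v) (n.1 v) => a b c d H.
  have -> : - b * c - - a * d = - (- d * a + c * b) by ring.
  by rewrite oppr_ge0.
exists t => f Hf; rewrite eval_upd -/(rest f).
case: (ltgtP (f.1 v) 0) => Hv.
- have := Ht1 (- rest f / f.1 v); rewrite ler_ndivrMr //.
  have -> : (- rest f / f.1 v \in Ls) by apply/mapP; exists f => //; rewrite mem_filter Hv.
  move=> /(_ isT); rewrite mulrC; lra.
- have := Ht2 (- rest f / f.1 v); rewrite ler_pdivlMr //.
  have -> : (- rest f / f.1 v \in Us) by apply/mapP; exists f => //; rewrite mem_filter Hv.
  move=> /(_ isT); rewrite mulrC; lra.
- have Hf' : f \in fm v s by rewrite mem_cat mem_filter Hv eqxx Hf.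
  have := Hs _ Hf'; rewrite -(eval_upd_self _ _ v) eval_upd Hv !mul0r !add0r.
  done.
Qed.

Definition fmall (vs : seq X) (s : seq form) : seq form := foldr fm s vs.

Lemma fmall_P (P : form -> Prop) vs s :
  (forall c1 f1 c2 f2, 0 <= c1 -> 0 <= c2 -> P f1 -> P f2 -> P (comb c1 f1 c2 f2)) ->
  (forall f, f \in s -> P f) -> forall f, f \in fmall vs s -> P f.
Proof.
move=> Hc Hs; elim: vs => [|v vs IH] f; first exact: Hs.
move=> /= /fm_comb [c1 [f1 [c2 [f2 [? ? H1 H2 ->]]]]].
by apply: Hc => //; apply: IH.
Qed.

Lemma fmall_zero vs s f : f \in fmall vs s -> forall v, v \in vs -> f.1 v = 0.
Proof.
elim: vs f => [|v vs IH] f //= Hf v'; rewrite inE => /orP [/eqP ->|Hv'].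
  exact: fm_zero Hf.
have [c1 [f1 [c2 [f2 [_ _ H1 H2 ->]]]]] := fm_comb Hf.
by rewrite /= ffunE (IH _ H1) // (IH _ H2) // !mulr0 addr0.
Qed.

Lemma fmall_proj vs s x : sat (fmall vs s) x ->
  exists x', sat s x' /\ forall i, i \notin vs -> x' i = x i.
Proof.
elim: vs x => [|v vs IH] x /= Hs; first by exists x.
have [t /IH [x' [Hx' Hi]]] := fm_proj Hs.
exists x'; split => // i; rewrite inE negb_or => /andP [Hiv Hivs].
by rewrite Hi // /upd (negbTE Hiv).
Qed.

Section Cone.
Variable J : finType.
Variable F : J -> form.

Definition cone (f : form) := exists y : J -> R,
  (forall j, 0 <= y j) /\ forall x, eval f x = \sum_j y j * eval (F j) x.

Lemma cone_comb c1 f1 c2 f2 : 0 <= c1 -> 0 <= c2 -> cone f1 -> cone f2 ->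
  cone (comb c1 f1 c2 f2).
Proof.
move=> H1 H2 [y1 [Hy1 E1]] [y2 [Hy2 E2]].
exists (fun j => c1 * y1 j + c2 * y2 j); split.
  by move=> j; rewrite addr_ge0 // mulr_ge0.
move=> x; rewrite eval_comb E1 E2 !mulr_sumr -big_split /=.
by apply: eq_bigr => j _; ring.
Qed.

Lemma cone_F j0 : cone (F j0).
Proof.
exists (fun j => if j == j0 then 1 else 0); split.
  by move=> j; case: eqP.
move=> x; rewrite (bigD1 j0) //= eqxx mul1r big1 ?addr0 //.
by move=> j /negbTE ->; rewrite mul0r.
Qed.

Definition satF x := forall j, eval (F j) x <= 0.

Lemma cone_sat f x : cone f -> satF x -> eval f x <= 0.
Proof.
move=> [y [Hy ->]] Hx; apply: sumr_le0 => j _.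
by rewrite mulr_ge0_le0.
Qed.

Lemma seq_argmax (T : eqType) (s : seq T) (k : T -> R) : s != [::] ->
  exists2 f, f \in s & forall g, g \in s -> k g <= k f.
Proof.
elim: s => [|a s IH] // _; case: (altP (s =P [::])) => [->|Hs].
  by exists a; rewrite ?inE ?eqxx // => g; rewrite inE => /eqP ->.
have [f Hf Hmax] := IH Hs.
case: (leP (k f) (k a)) => H.
  exists a; first by rewrite inE eqxx.
  move=> g; rewrite inE => /orP [/eqP ->//|/Hmax Hg]; exact: le_trans Hg H.
exists f; first by rewrite inE Hf orbT.
move=> g; rewrite inE => /orP [/eqP ->|/Hmax //]; exact: ltW.
Qed.

Lemma lp_min (z : X) :
  (exists x0, satF x0) ->
  (exists m, forall x, satF x -> m <= x z) ->
  exists xs, [/\ satF xs, (forall x, satF x -> xs z <= x z) &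
   (exists y : J -> R, (forall j, 0 <= y j) /\
     (forall x, xs z - x z = \sum_j y j * eval (F j) x))].
Proof.
move=> [x0 Hx0] [m Hm].
pose vs := [seq i <- enum X | i != z].
pose s0 := [seq F j | j <- enum J].
pose sf := fmall vs s0.
have Hcone : forall f, f \in sf -> cone f.
  apply: fmall_P; first by move=> *; apply: cone_comb.
  by move=> f /mapP [j _ ->]; apply: cone_F.
have Hev : forall f x, f \in sf -> eval f x = f.1 z * x z - f.2.
  move=> f x Hf; rewrite /eval (bigD1 z) //= big1 ?addr0 // => i Hi.
  by rewrite (fmall_zero Hf) ?mul0r // mem_filter Hi mem_enum.
have Hsf : forall x, satF x -> sat sf x.
  by move=> x Hx f Hf; apply: cone_sat (Hcone _ Hf) Hx.
have Hproj : forall t, sat sf (fun _ => t) -> exists2 x', satF x' & x' z = t.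
  move=> t /fmall_proj [x' [Hx' Hi]]; exists x'.
    by move=> j; apply: Hx'; apply/mapP; exists j; rewrite ?mem_enum.
  by rewrite Hi // mem_filter eqxx.
pose Lo := [seq f <- sf | (f : form).1 z < 0].
case: (altP (Lo =P [::])) => HLo.
  exfalso.
  pose t := Num.min (x0 z) (m - 1).
  have [|x' Hx' Ext] := Hproj t.
    move=> f Hf; rewrite Hev //.
    have Hf0 : 0 <= f.1 z.
      rewrite leNgt; apply/negP => Hneg.
      have : f \in Lo by rewrite mem_filter Hneg Hf.
      by rewrite HLo.
    apply: le_trans (_ : f.1 z * x0 z - f.2 <= 0).
      by rewrite lerD2r ler_wpM2l // /t ge_min lexx.
    by rewrite -Hev //; apply: Hsf.
  have := Hm _ Hx'; rewrite Ext /t le_min => /andP [_ H].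
  have : m - 1 < m by rewrite ltrBlDr ltrDl ltr01.
  by rewrite ltNge H.
have [fs Hfs Hmax] := seq_argmax (fun f : form => f.2 / f.1 z) HLo.
move: Hfs; rewrite mem_filter => /andP [Hfsz Hfs].
pose zmin := fs.2 / fs.1 z.
have Hzx : forall x, satF x -> zmin <= x z.
  move=> x Hx; have := Hsf _ Hx _ Hfs; rewrite Hev // /zmin subr_le0.
  by rewrite ler_ndivrMr // mulrC.
have [|xs Hxs Exs] := Hproj zmin.
  move=> f Hf; rewrite Hev // subr_le0.
  case: (ltgtP (f.1 z) 0) => Hz.
  - have : f \in Lo by rewrite mem_filter Hz Hf.
    by move/Hmax; rewrite ler_ndivrMr // mulrC.
  - apply: le_trans (_ : f.1 z * x0 z <= f.2).
      by apply: ler_wpM2l; [exact: ltW | exact: Hzx].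
    by have := Hsf _ Hx0 _ Hf; rewrite Hev // subr_le0.
  - by have := Hsf _ Hx0 _ Hf; rewrite Hev // Hz !mul0r sub0r oppr_le0.
exists xs; split => //.
  by move=> x Hx; rewrite Exs; apply: Hzx.
have [y [Hy Ey]] := Hcone _ Hfs.
exists (fun j => y j / - fs.1 z); split.
  by move=> j; rewrite divr_ge0 // oppr_ge0 ltW.
move=> x; rewrite (eq_bigr (fun j => y j * eval (F j) x / - fs.1 z)); last by move=> j _; rewrite mulrAC.
rewrite -mulr_suml -Ey Hev // Exs /zmin.
field; by rewrite lt_eqF.
Qed.

End Cone.
End FM.

Section MinI.
Variable R : realType.
Variable I : finType.

Lemma minI_le (f : I -> R) i : minI f <= f i.
Proof.
rewrite /minI; case: pickP => [i0 _|H]; first exact: bigmin_le.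
by have := H i.
Qed.

Lemma minI_att (f : I -> R) (i1 : I) : exists i, minI f = f i.
Proof.
rewrite /minI; case: pickP => [i0 _|H]; last by have := H i1.
apply: (big_ind (fun v => exists i, v = f i)); first by exists i0.
  move=> a b [ia ->] [ib ->]; case: (leP (f ia) (f ib)) => H.
    by exists ia.
  by exists ib.
by move=> i _; exists i.
Qed.
End MinI.

Section App.
Variables (R : realType) (V : finType) (n : nat) (w : V -> V -> R)
  (C : 'I_n -> V -> R) (Sl Su : 'I_n -> nat) (gamma : gam R).
Hypothesis wsym : forall x y, w x y = w y x.
Hypothesis wpos : forall x y, 0 <= w x y.

Lemma div_id (u : V -> R) (q : V -> V -> R) :
  \sum_x u x * divw w q x =
  2^-1 * \sum_x \sum_y w x y * q x y * (u x - u y).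
Proof.
have E1 : \sum_x u x * divw w q x = 2^-1 *
   (\sum_x \sum_y w x y * q x y * u x - \sum_x \sum_y w x y * q y x * u x).
  rewrite -sumrB mulr_sumr; apply: eq_bigr => x _.
  rewrite -sumrB /divw mulrCA; congr (_ * _); rewrite mulr_sumr.
  by apply: eq_bigr => y _; ring.
have E2 : \sum_x \sum_y w x y * q y x * u x = \sum_x \sum_y w x y * q x y * u y.
  by rewrite exchange_big; apply: eq_bigr => x _; apply: eq_bigr => y _; rewrite wsym.
rewrite E1 E2; congr (_ * _); rewrite -sumrB; apply: eq_bigr => x _.
by rewrite -sumrB; apply: eq_bigr => y _; ring.
Qed.

Lemma TV_bound (u : V -> R) (q : V -> V -> R) : (forall x y, `|q x y| <= 1) ->
  \sum_x u x * divw w q x <= TVw w u.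
Proof.
move=> Hq; rewrite div_id /TVw; apply: ler_wpM2l; first by rewrite invr_ge0 ler0n.
apply: ler_sum => x _; apply: ler_sum => y _; rewrite -mulrA.
apply: ler_wpM2l => //; apply: le_trans (ler_norm _) _.
rewrite normrM; have -> : `|u x - u y| = `|u y - u x| by exact: distrC.
by rewrite ler_piMl.
Qed.

Lemma TV_att (u : V -> R) :
  \sum_x u x * divw w (fun x y => if u y <= u x then 1 else -1) x = TVw w u.
Proof.
rewrite div_id /TVw; congr (_ * _); apply: eq_bigr => x _; apply: eq_bigr => y _.
rewrite -mulrA; congr (_ * _); case: lerP => H.
  by rewrite mul1r.
by rewrite mulN1r opprB.
Qed.

Definition Lag (q : 'I_n -> V -> V -> R) (r1 r2 : 'I_n -> R) (u : 'I_n -> V -> R) : R :=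
  \sum_(i < n) \sum_x C i x * u i x + \sum_(i < n) \sum_x u i x * divw w (q i) x +
  \sum_(i < n) (r1 i * ((Sl i)%:R - msize (u i)) + r2 i * (msize (u i) - (Su i)%:R)).

Definition Dc (q : 'I_n -> V -> V -> R) (r1 r2 : 'I_n -> R) i x :=
  C i x + divw w (q i) x + r2 i - r1 i.

Lemma Lag_D q r1 r2 u : Lag q r1 r2 u =
  \sum_(i < n) \sum_x u i x * Dc q r1 r2 i x +
  \sum_(i < n) (r1 i * (Sl i)%:R - r2 i * (Su i)%:R).
Proof.
rewrite /Lag -!big_split; apply: eq_bigr => i _ /=.
have -> : \sum_x u i x * Dc q r1 r2 i x = \sum_x C i x * u i x +
   \sum_x u i x * divw w (q i) x + r2 i * msize (u i) - r1 i * msize (u i).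
  rewrite /msize !mulr_sumr -!big_split /= -sumrN -big_split; apply: eq_bigr => x _.
  by rewrite /Dc /=; ring.
ring.
Qed.

Lemma pen_bound (g r1 r2 : R) (a b : nat) (t : R) : (a <= b)%N -> 0 <= r1 <= g -> 0 <= r2 <= g ->
  r1 * (a%:R - t) + r2 * (t - b%:R) <= Pgam g a b t.
Proof.
move=> Hab /andP [H1 H1'] /andP [H2 H2'].
have Hab' : (a%:R : R) <= b%:R by rewrite ler_nat.
rewrite /Pgam; case: ifP => [/andP [Ht1 Ht2]|Ht].
  rewrite -(addr0 (0:R)); apply: lerD; apply: mulr_ge0_le0 => //; rewrite subr_le0 //.
case: ifP => Ht'.
  apply: le_trans (_ : _ <= 0 + g * (t - b%:R)) _; last by rewrite add0r.
  apply: lerD.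
    by apply: mulr_ge0_le0 => //; rewrite subr_le0; apply: le_trans Hab' (ltW Ht').
  by apply: ler_wpM2r => //; rewrite subr_ge0 ltW.
have Hta : t < a%:R.
  move: Ht Ht'; case: (leP (a%:R) t) => //= Hat; case: (leP t b%:R) => //.
apply: le_trans (_ : _ <= g * (a%:R - t) + 0) _; last by rewrite addr0.
apply: lerD.
  by apply: ler_wpM2r => //; rewrite subr_ge0 ltW.
by apply: mulr_ge0_le0 => //; rewrite subr_le0; apply: le_trans (ltW Hta) Hab'.
Qed.

Hypothesis HS : forall i, (Sl i <= Su i)%N.

Lemma Lag_le_E u q r1 r2 : primal_feasible Sl Su gamma u ->
  dual_feasible gamma q r1 r2 -> Lag q r1 r2 u <= primal_energy w C Sl Su gamma u.
Proof.
move=> [HB Hsz] [Hq Hr]; rewrite /Lag /primal_energy.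
apply: lerD; first by apply: lerD => //; apply: ler_sum => i _; apply: TV_bound; apply: Hq.
move: Hsz Hr; case: gamma => [|g|] /= Hsz Hr.
- apply: sumr_le0 => i _; have [-> ->] := Hr i; rewrite !mul0r addr0 //=.
- apply: ler_sum => i _; have [H1 H2] := Hr i; exact: pen_bound.
- apply: sumr_le0 => i _; have [H1 H2] := Hr i; have /andP [Ha Hb] := Hsz i.
  rewrite -(addr0 (0:R)); apply: lerD; [apply: mulr_ge0_le0 | apply: mulr_ge0_le0] => //.
    by rewrite subr_le0.
  by rewrite subr_le0.
Qed.

Lemma dual_le_Lag q r1 r2 u : (forall i x, 0 <= u i x) -> (forall x, \sum_i u i x = 1) ->
  dual_value w C Sl Su q r1 r2 <= Lag q r1 r2 u.
Proof.
move=> Hu Hs; rewrite Lag_D /dual_value; apply: lerD => //.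
rewrite exchange_big; apply: ler_sum => x _.
rewrite -[X in X <= _]mul1r -(Hs x) mulr_suml; apply: ler_sum => i _.
by apply: (ler_wpM2l (Hu i x)); apply: (minI_le (fun i => Dc q r1 r2 i x)).
Qed.

Lemma dual_att q r1 r2 (i0 : 'I_n) : exists u : 'I_n -> V -> R,
  [/\ (forall i x, 0 <= u i x), (forall x, \sum_i u i x = 1) &
      Lag q r1 r2 u <= dual_value w C Sl Su q r1 r2].
Proof.
pose ix x := odflt i0 [pick i | minI (fun i => Dc q r1 r2 i x) == Dc q r1 r2 i x].
have Hix : forall x, minI (fun i => Dc q r1 r2 i x) = Dc q r1 r2 (ix x) x.
  move=> x; rewrite /ix; case: pickP => [i /eqP //|H].
  have [i Hi] := minI_att (fun i => Dc q r1 r2 i x) i0.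
  by have := H i; rewrite Hi eqxx.
exists (fun i x => if i == ix x then 1 else 0); split.
- by move=> i x; case: eqP.
- by move=> x; rewrite (bigD1 (ix x)) //= eqxx big1 ?addr0 // => i /negbTE ->.
rewrite Lag_D /dual_value; apply: lerD => //; rewrite exchange_big.
apply: ler_sum => x _; rewrite (bigD1 (ix x)) //= eqxx big1 ?addr0.
  by rewrite mul1r Hix.
by move=> i /negbTE ->; rewrite mul0r.
Qed.

Hypothesis Hgpos : forall g, gamma = gFin g -> 0 < g.

Definition K := ({ffun 'I_n * V * V -> bool} * {ffun 'I_n -> bool * bool})%type.
Definition qof (k : K) i (x y : V) : R := if k.1 (i, x, y) then 1 else -1.
Definition r1of (k : K) i : R :=
  match gamma with gFin g => if (k.2 i).1 then g else 0 | _ => 0 end.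
Definition r2of (k : K) i : R :=
  match gamma with gFin g => if (k.2 i).2 then g else 0 | _ => 0 end.
Definition LagK k u := Lag (qof k) (r1of k) (r2of k) u.

Lemma vert_feas k : dual_feasible gamma (qof k) (r1of k) (r2of k).
Proof.
split.
  by move=> i x y; rewrite /qof; case: ifP; rewrite ?normr1 ?normrN1.
move=> i; rewrite /r1of /r2of /in_0_gamma; case Hgm: gamma => [|g|] //=.
have Hg := Hgpos Hgm.
by split; case: ifP; rewrite ?lexx ?ltW.
Qed.

Lemma divw_ext (q q' : V -> V -> R) x : (forall a b, q a b = q' a b) ->
  divw w q x = divw w q' x.
Proof. by move=> H; rewrite /divw; congr (_ * _); apply: eq_bigr => y _; rewrite !H. Qed.

Lemma pen_att (g : R) (a b : nat) (t : R) : 0 < g -> (a <= b)%N ->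
  Pgam g a b t <= (if t < a%:R then g else 0) * (a%:R - t) +
                  (if b%:R < t then g else 0) * (t - b%:R).
Proof.
move=> Hg Hab; have Hab' : (a%:R : R) <= b%:R by rewrite ler_nat.
rewrite /Pgam; case: (leP a%:R t) => H1; case: (leP t b%:R) => H2 /=.
- by rewrite !mul0r addr0.
- by rewrite mul0r add0r.
- by rewrite mul0r addr0.
- by have := lt_trans H2 (lt_le_trans H1 Hab'); rewrite ltxx.
Qed.

Lemma vert_att u : primal_feasible Sl Su gamma u ->
  exists k, primal_energy w C Sl Su gamma u <= LagK k u.
Proof.
move=> [HB Hsz].
exists ([ffun t => u t.1.1 t.2 <= u t.1.1 t.1.2],
        [ffun i => (msize (u i) < (Sl i)%:R, (Su i)%:R < msize (u i))]).
rewrite /LagK /Lag /primal_energy; apply: lerD.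
  apply: lerD => //; apply: ler_sum => i _; rewrite -TV_att le_eqVlt; apply/orP; left.
  apply/eqP; apply: eq_bigr => x _; congr (_ * _); apply: divw_ext => a b.
  by rewrite /qof /= ffunE.
rewrite /r1of /r2of; case Hgm: gamma => [|g|] /=.
- by apply: sumr_ge0 => i _; rewrite !mul0r addr0.
- apply: ler_sum => i _; rewrite !ffunE /=; apply: pen_att => //; exact: Hgpos.
- by apply: sumr_ge0 => i _; rewrite !mul0r addr0.
Qed.

Definition XV := ('I_n * V + unit)%type.
Definition uof (x : XV -> R) i v := x (inl (i, v)).
Definition pt (u : 'I_n -> V -> R) (t : R) : XV -> R :=
  fun o => match o with inl p => u p.1 p.2 | inr _ => t end.

Definition mkf (A : 'I_n -> V -> R) (az b : R) : form R XV :=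
  ([ffun o => match o with inl p => A p.1 p.2 | inr _ => az end], b).

Lemma eval_mkf A az b x : eval (mkf A az b) x =
  \sum_i \sum_v A i v * uof x i v + az * x (inr tt) - b.
Proof.
rewrite /eval big_sumType /= (big_pred1 tt); last by case.
rewrite pair_big /= ffunE; congr (_ + _ - _).
by apply: eq_bigr => -[i v] _; rewrite ffunE.
Qed.

Lemma sum_if (I : finType) (i0 : I) (F : I -> R) :
  \sum_i (if i == i0 then F i else 0) = F i0.
Proof. by rewrite (bigD1 i0) //= eqxx big1 ?addr0 // => i /negbTE ->. Qed.

Definition sgn (b : bool) : R := if b then 1 else -1.

Definition G := ('I_n * V + V * bool + 'I_n * bool)%type.
Definition J := (K + G)%type.

Definition Ff (j : J) : form R XV :=
  match j with
  | inl k => mkf (Dc (qof k) (r1of k) (r2of k)) (-1)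
                 (- \sum_i (r1of k i * (Sl i)%:R - r2of k i * (Su i)%:R))
  | inr (inl (inl (i0, v0))) => mkf (fun i v => if (i == i0) && (v == v0) then -1 else 0) 0 0
  | inr (inl (inr (v0, b))) => mkf (fun i v => if v == v0 then sgn b else 0) 0 (sgn b)
  | inr (inr (i0, b)) =>
      match gamma with
      | gInf => if b then mkf (fun i v => if i == i0 then 1 else 0) 0 (Su i0)%:R
                else mkf (fun i v => if i == i0 then -1 else 0) 0 (- (Sl i0)%:R)
      | _ => mkf (fun _ _ => 0) 0 0
      end
  end.

Definition szc i0 (b : bool) (u : 'I_n -> V -> R) : R :=
  match gamma with
  | gInf => if b then msize (u i0) - (Su i0)%:R else (Sl i0)%:R - msize (u i0)
  | _ => 0
  end.

Lemma ev_k k x : eval (Ff (inl k)) x = LagK k (uof x) - x (inr tt).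
Proof.
rewrite /= eval_mkf /LagK Lag_D.
have -> : \sum_i \sum_v Dc (qof k) (r1of k) (r2of k) i v * uof x i v =
          \sum_i \sum_v uof x i v * Dc (qof k) (r1of k) (r2of k) i v.
  by apply: eq_bigr => i _; apply: eq_bigr => v _; rewrite mulrC.
ring.
Qed.

Lemma ev_nn i0 v0 x : eval (Ff (inr (inl (inl (i0, v0))))) x = - uof x i0 v0.
Proof.
rewrite /= eval_mkf mul0r addr0 subr0.
rewrite (eq_bigr (fun i => if i == i0 then - uof x i v0 else 0)).
  by rewrite sum_if.
move=> i _; case: eqP => Hi /=.
  rewrite (eq_bigr (fun v => if v == v0 then - uof x i v0 else 0)) ?sum_if //.
  by move=> v _; case: eqP => [->|]; rewrite ?mulN1r ?mul0r.
by rewrite big1 // => v _; rewrite mul0r.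
Qed.

Lemma ev_eq v0 b x : eval (Ff (inr (inl (inr (v0, b))))) x =
  sgn b * (\sum_i uof x i v0 - 1).
Proof.
rewrite /= eval_mkf mul0r addr0 mulrBr mulr1 mulr_sumr; congr (_ - _).
apply: eq_bigr => i _.
rewrite (eq_bigr (fun v => if v == v0 then sgn b * uof x i v0 else 0)) ?sum_if //.
by move=> v _; case: eqP => [->|]; rewrite ?mul0r.
Qed.

Lemma ev_sz i0 b x : eval (Ff (inr (inr (i0, b)))) x = szc i0 b (uof x).
Proof.
rewrite /Ff /szc; case: gamma => [|g|]; rewrite ?eval_mkf.
- by rewrite big1 ?mul0r ?add0r ?subr0 ?oppr0 // => i _; rewrite big1 // => v _; rewrite mul0r.
- by rewrite big1 ?mul0r ?add0r ?subr0 ?oppr0 // => i _; rewrite big1 // => v _; rewrite mul0r.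
case: b; rewrite eval_mkf mul0r addr0.
  rewrite (eq_bigr (fun i => if i == i0 then msize (uof x i0) else 0)) ?sum_if //.
  move=> i _; case: eqP => [->|]; last by rewrite big1 // => v _; rewrite mul0r.
  by apply: eq_bigr => v _; rewrite mul1r.
rewrite (eq_bigr (fun i => if i == i0 then - msize (uof x i0) else 0)) ?sum_if.
  by rewrite opprK addrC.
move=> i _; case: eqP => [->|]; last by rewrite big1 // => v _; rewrite mul0r.
by rewrite /msize -sumrN; apply: eq_bigr => v _; rewrite mulN1r.
Qed.

Lemma divw_lin (Kt : finType) (c : Kt -> R) (q : Kt -> V -> V -> R) x :
  divw w (fun a b => \sum_k c k * q k a b) x = \sum_k c k * divw w (q k) x.
Proof.
rewrite /divw.
transitivity (\sum_k \sum_y 2^-1 * (c k * (w x y * (q k x y - q k y x)))).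
  rewrite exchange_big mulr_sumr; apply: eq_bigr => y _.
  by rewrite -sumrB mulr_sumr mulr_sumr; apply: eq_bigr => k _; ring.
by apply: eq_bigr => k _; rewrite !mulr_sumr; apply: eq_bigr => y _; ring.
Qed.

Lemma Lag_lin (Kt : finType) (c : Kt -> R) (q : Kt -> 'I_n -> V -> V -> R)
   (r1 r2 : Kt -> 'I_n -> R) (e1 e2 : 'I_n -> R) u : \sum_k c k = 1 ->
  Lag (fun i a b => \sum_k c k * q k i a b) (fun i => \sum_k c k * r1 k i + e1 i)
      (fun i => \sum_k c k * r2 k i + e2 i) u =
  \sum_k c k * Lag (q k) (r1 k) (r2 k) u +
  \sum_(i < n) (e1 i * ((Sl i)%:R - msize (u i)) + e2 i * (msize (u i) - (Su i)%:R)).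
Proof.
move=> Hc; rewrite /Lag.
have E1 : \sum_(i < n) \sum_x u i x * divw w (fun a b => \sum_k c k * q k i a b) x =
          \sum_k c k * \sum_(i < n) \sum_x u i x * divw w (q k i) x.
  under eq_bigr => i _ do under eq_bigr => x _ do rewrite (divw_lin c (fun k => q k i)) mulr_sumr.
  under [RHS]eq_bigr => k _ do rewrite mulr_sumr.
  rewrite [RHS]exchange_big; apply: eq_bigr => i _ /=.
  under [RHS]eq_bigr => k _ do rewrite mulr_sumr.
  rewrite [RHS]exchange_big; apply: eq_bigr => x _; apply: eq_bigr => k _ /=; ring.
have E2 : \sum_(i < n) ((\sum_k c k * r1 k i + e1 i) * ((Sl i)%:R - msize (u i)) +
                        (\sum_k c k * r2 k i + e2 i) * (msize (u i) - (Su i)%:R)) =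
  \sum_k c k * \sum_(i < n) (r1 k i * ((Sl i)%:R - msize (u i)) +
                             r2 k i * (msize (u i) - (Su i)%:R)) +
  \sum_(i < n) (e1 i * ((Sl i)%:R - msize (u i)) + e2 i * (msize (u i) - (Su i)%:R)).
  rewrite (eq_bigr (fun i => \sum_k c k * (r1 k i * ((Sl i)%:R - msize (u i)) +
                             r2 k i * (msize (u i) - (Su i)%:R)) +
     (e1 i * ((Sl i)%:R - msize (u i)) + e2 i * (msize (u i) - (Su i)%:R)))).
    rewrite big_split /=; congr (_ + _); rewrite exchange_big /=.
    by apply: eq_bigr => k _; rewrite mulr_sumr.
  move=> i _.
  have -> : \sum_k c k * (r1 k i * ((Sl i)%:R - msize (u i)) +
                             r2 k i * (msize (u i) - (Su i)%:R)) =
     (\sum_k c k * r1 k i) * ((Sl i)%:R - msize (u i)) +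
     (\sum_k c k * r2 k i) * (msize (u i) - (Su i)%:R).
    by rewrite !mulr_suml -big_split /=; apply: eq_bigr => k _; ring.
  ring.
rewrite E1 E2.
have E3 : \sum_k c k * (\sum_(i < n) \sum_x C i x * u i x +
   \sum_(i < n) \sum_x u i x * divw w (q k i) x +
   \sum_(i < n) (r1 k i * ((Sl i)%:R - msize (u i)) + r2 k i * (msize (u i) - (Su i)%:R))) =
   (\sum_k c k) * (\sum_(i < n) \sum_x C i x * u i x) +
   \sum_k c k * \sum_(i < n) \sum_x u i x * divw w (q k i) x +
   \sum_k c k * \sum_(i < n) (r1 k i * ((Sl i)%:R - msize (u i)) + r2 k i * (msize (u i) - (Su i)%:R)).
  rewrite mulr_suml -!big_split /=; apply: eq_bigr => k _; ring.
rewrite E3 Hc mul1r; ring.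
Qed.

Lemma feas_exists : (\sum_(i < n) Sl i <= #|V| <= \sum_(i < n) Su i)%N ->
  exists u : 'I_n -> V -> R, primal_feasible Sl Su gamma u.
Proof.
move=> /andP [HA HB].
pose A : R := (\sum_(i < n) Sl i)%:R.
pose B : R := (\sum_(i < n) Su i)%:R.
pose N : R := #|V|%:R.
have HA' : A <= N by rewrite ler_nat.
have HB' : N <= B by rewrite ler_nat.
pose th : R := if A < B then (N - A) / (B - A) else 0.
have Hth0 : 0 <= th.
  rewrite /th; case: ifP => // H; rewrite divr_ge0 // subr_ge0 //; exact: ltW.
have Hth1 : th <= 1.
  rewrite /th; case: ifP => H //; rewrite ler_pdivrMr ?mul1r ?subr_gt0 //.
  by rewrite lerD2r.
have HthN : A + th * (B - A) = N.
  rewrite /th; case: ifP => H.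
    by rewrite divfK ?subr_eq0 ?gt_eqF // addrC subrK.
  have HAB : A = B by apply/eqP; rewrite eq_le (le_trans HA' HB') leNgt H.
  by rewrite mul0r addr0; apply/eqP; rewrite eq_le HA' /= HAB HB'.
pose c i : R := (Sl i)%:R + th * ((Su i)%:R - (Sl i)%:R).
have Hc0 : forall i, (Sl i)%:R <= c i.
  by move=> i; rewrite lerDl mulr_ge0 // subr_ge0 ler_nat.
have Hc1 : forall i, c i <= (Su i)%:R.
  move=> i; rewrite /c -lerBrDl; rewrite -[X in _ <= X]mul1r.
  by apply: ler_wpM2r => //; rewrite subr_ge0 ler_nat.
have Hcs : \sum_i c i = N.
  rewrite -HthN big_split /= -mulr_sumr sumrB /A /B !natr_sum //.
have Hcpos : forall i, 0 <= c i by move=> i; apply: le_trans (Hc0 i).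
have HcN : forall i, c i <= N.
  move=> i; rewrite -Hcs (bigD1 i) //= lerDl; exact: sumr_ge0.
case: (posnP #|V|) => HV.
  exists (fun i x => 0); split.
    split; first by move=> i x; rewrite lexx ler01.
    by move=> x; have := card0_eq HV x.
  case: gamma => //= i; rewrite /msize big1 // ler0n /=.
  have : (Sl i <= 0)%N.
    rewrite -HV; apply: leq_trans HA; rewrite (bigD1 i) //=; exact: leq_addr.
  by rewrite leqn0 => /eqP ->; rewrite lexx.
have HN : 0 < N by rewrite ltr0n.
exists (fun i x => c i / N); split.
  split.
    move=> i x; apply/andP; split; first by apply: divr_ge0 => //; exact: ltW.
    by rewrite ler_pdivrMr // mul1r.
  by move=> x; rewrite -mulr_suml Hcs divff // gt_eqF.
have Hm : forall i : 'I_n, msize (fun x : V => c i / N) = c i.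
  move=> i; rewrite /msize sumr_const -mulr_natl -/N mulrC divfK //.
  by rewrite gt_eqF.
case: gamma => //= i; rewrite Hm; exact/andP.
Qed.

Lemma uof_pt u t : uof (pt u t) = u.
Proof. by []. Qed.

Lemma sat_pt v t : primal_feasible Sl Su gamma v ->
  primal_energy w C Sl Su gamma v <= t -> satF Ff (pt v t).
Proof.
move=> Hv Ht; have [[HB0 HB1] Hsz] := Hv.
case=> [k|[[[i x]|[x b]]|[i b]]].
- rewrite ev_k /= subr_le0; apply: le_trans Ht.
  exact: Lag_le_E Hv (vert_feas k).
- by rewrite ev_nn oppr_le0 /uof /=; have /andP [] := HB0 i x.
- by rewrite ev_eq /uof /= HB1 subrr mulr0.
- rewrite ev_sz /szc; move: Hsz; case: gamma => // Hsz.
  have /andP [H1 H2] := Hsz i.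
  by case: b; rewrite subr_le0.
Qed.

Lemma sat_B x : satF Ff x ->
  (forall i v, 0 <= uof x i v) /\ (forall v, \sum_i uof x i v = 1).
Proof.
move=> Hx; split.
  by move=> i v; have := Hx (inr (inl (inl (i, v)))); rewrite ev_nn oppr_le0.
move=> v; have := Hx (inr (inl (inr (v, true)))); rewrite ev_eq /sgn mul1r subr_le0.
have := Hx (inr (inl (inr (v, false)))); rewrite ev_eq /sgn mulN1r oppr_le0 subr_ge0.
by move=> H1 H2; apply/eqP; rewrite eq_le H1 H2.
Qed.

Lemma sat_feas x : satF Ff x -> primal_feasible Sl Su gamma (uof x).
Proof.
move=> Hx; have [H0 H1] := sat_B Hx; split; first split => //.
  move=> i v; rewrite H0 /= -(H1 v) (bigD1 i) //= lerDl; exact: sumr_ge0.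
have Hs : forall i b, szc i b (uof x) <= 0.
  by move=> i b; rewrite -ev_sz; exact: Hx.
move: Hs; rewrite /szc; case: gamma => // Hs i.
have := Hs i true; have := Hs i false; rewrite /= !subr_le0 => Ha Hb.
by apply/andP.
Qed.

Lemma sum_pair_bool (F : 'I_n * bool -> R) :
  \sum_(p : 'I_n * bool) F p = \sum_(i < n) (F (i, true) + F (i, false)).
Proof.
transitivity (\sum_(p : 'I_n * bool) F (p.1, p.2)); first by apply: eq_bigr => -[].
rewrite -(pair_bigA _ (fun i b => F (i, b))) /=.
by apply: eq_bigr => i _; rewrite big_bool.
Qed.

Lemma main (Hn : (0 < n)%N) :
  (\sum_(i < n) Sl i <= #|V| <= \sum_(i < n) Su i)%N ->
  exists u : 'I_n -> V -> R,
    [/\ primal_feasible Sl Su gamma u,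
        (forall v, primal_feasible Sl Su gamma v ->
           primal_energy w C Sl Su gamma u <= primal_energy w C Sl Su gamma v),
        (forall q rho1 rho2, dual_feasible gamma q rho1 rho2 ->
           dual_value w C Sl Su q rho1 rho2 <= primal_energy w C Sl Su gamma u) &
        (forall eps : R, 0 < eps -> exists q rho1 rho2,
           dual_feasible gamma q rho1 rho2 /\
           primal_energy w C Sl Su gamma u - eps < dual_value w C Sl Su q rho1 rho2)].
Proof.
move=> Hsz.
have [u0 Hu0] := feas_exists Hsz.
pose i0 : 'I_n := Ordinal Hn.
pose k0 : K := ([ffun _ => true], [ffun _ => (false, false)]).
have [||xs [Hxs Hmin [y [Hy Ey]]]] := @lp_min _ XV J Ff (inr tt).
- by exists (pt u0 (primal_energy w C Sl Su gamma u0)); apply: sat_pt.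
- exists (dual_value w C Sl Su (qof k0) (r1of k0) (r2of k0)) => x Hx.
  have [H0 H1] := sat_B Hx.
  apply: le_trans (dual_le_Lag _ _ _ H0 H1) _.
  by have := Hx (inl k0); rewrite ev_k subr_le0.
pose us := uof xs.
have Hfeas : primal_feasible Sl Su gamma us := sat_feas Hxs.
have HEopt : primal_energy w C Sl Su gamma us <= xs (inr tt).
  have [k Hk] := vert_att Hfeas; apply: le_trans Hk _.
  by have := Hxs (inl k); rewrite ev_k subr_le0.
have Hopt : forall v, primal_feasible Sl Su gamma v ->
    xs (inr tt) <= primal_energy w C Sl Su gamma v.
  by move=> v Hv; exact: (Hmin _ (sat_pt Hv (lexx _))).
exists us; split => //.
- by move=> v Hv; apply: le_trans HEopt (Hopt v Hv).
- move=> q r1 r2 Hd; have [H0 H1] := sat_B Hxs.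
  exact: le_trans (dual_le_Lag _ _ _ H0 H1) (Lag_le_E Hfeas Hd).
move=> eps Heps.
pose yK k := y (inl k).
pose yS (ib : 'I_n * bool) := y (inr (inr ib)).
pose sz (c : R) := match gamma with gInf => c | _ => 0 end.
pose qb i (a b : V) := \sum_k yK k * qof k i a b.
pose r1b i := \sum_k yK k * r1of k i + sz (yS (i, false)).
pose r2b i := \sum_k yK k * r2of k i + sz (yS (i, true)).
have EG : forall u t, \sum_(g : G) y (inr g) * eval (Ff (inr g)) (pt u t) =
                      \sum_(g : G) y (inr g) * eval (Ff (inr g)) (pt u 0).
  by move=> u t; apply: eq_bigr => -[[[i v]|[v b]]|[i b]] _; rewrite ?ev_nn ?ev_eq ?ev_sz.
have Esplit : forall x, \sum_j y j * eval (Ff j) x =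
    \sum_k yK k * LagK k (uof x) - x (inr tt) * \sum_k yK k +
    \sum_(g : G) y (inr g) * eval (Ff (inr g)) x.
  move=> x; rewrite big_sumType; congr (_ + _).
  rewrite mulr_sumr -sumrB; apply: eq_bigr => k _; rewrite ev_k /yK; ring.
have HyK : \sum_k yK k = 1.
  have E0 := Ey (pt us 0); have E1 := Ey (pt us 1).
  rewrite Esplit in E0; rewrite Esplit EG in E1.
  move: E0 E1; rewrite /= !uof_pt.
  move: (\sum_k yK k * LagK k us) (\sum_k yK k)
        (\sum_(g : G) y (inr g) * eval (Ff (inr g)) (pt us 0)) => a b c E0 E1.
  lra.
have [u' [Hu0' Hu1' Hu']] := dual_att qb r1b r2b i0.
have Hlin : Lag qb r1b r2b u' = \sum_k yK k * LagK k u' +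
   \sum_(i < n) (sz (yS (i, false)) * ((Sl i)%:R - msize (u' i)) +
                 sz (yS (i, true)) * (msize (u' i) - (Su i)%:R)).
  exact: Lag_lin.
have HGb : \sum_(g : G) y (inr g) * eval (Ff (inr g)) (pt u' 0) <=
   \sum_(i < n) (sz (yS (i, false)) * ((Sl i)%:R - msize (u' i)) +
                 sz (yS (i, true)) * (msize (u' i) - (Su i)%:R)).
  rewrite big_sumType big_sumType /=.
  rewrite -[X in _ <= X]add0r -addrA; apply: lerD.
    apply: sumr_le0 => -[i v] _; rewrite ev_nn uof_pt.
    by rewrite mulr_ge0_le0 // oppr_le0.
  rewrite big1 ?add0r; last first.
    by move=> -[v b] _; rewrite ev_eq uof_pt Hu1' subrr !mulr0.
  rewrite (sum_pair_bool (fun p => y (inr (inr p)) * eval (Ff (inr (inr p))) (pt u' 0))).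
  apply: ler_sum => i _; rewrite !ev_sz uof_pt /szc /sz /yS.
  by case: gamma => [|g|] /=; rewrite ?mulr0 ?mul0r ?addr0 ?lexx // addrC.
have Hopt' : xs (inr tt) <= dual_value w C Sl Su qb r1b r2b.
  apply: le_trans Hu'; rewrite Hlin.
  have := Ey (pt u' 0); rewrite Esplit uof_pt /= HyK mul0r subr0 subr0 => ->.
  by rewrite lerD2l.
exists qb, r1b, r2b; split; last first.
  by apply: lt_le_trans Hopt'; apply: lt_le_trans HEopt; rewrite ltrBlDr ltrDl.
split.
  move=> i a b; apply: le_trans (ler_norm_sum _ _ _) _.
  rewrite -HyK; apply: ler_sum => k _; rewrite normrM ger0_norm ?Hy //.
  apply: ler_piMr; first exact: Hy.
  by have [Hq _] := vert_feas k; apply: Hq.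
move=> i; rewrite /r1b /r2b /sz /r1of /r2of /in_0_gamma.
case Hgm: gamma => [|g|].
- by rewrite !big1 ?addr0 // => k _; rewrite mulr0.
- have Hg := Hgpos Hgm.
  have Hb : forall (f : K -> bool), 0 <= \sum_k yK k * (if f k then g else 0) + 0 <= g.
    move=> f; rewrite addr0; apply/andP; split.
      apply: sumr_ge0 => k _; apply: mulr_ge0; first exact: Hy.
      by case: ifP => // _; exact: ltW.
    apply: le_trans (_ : \sum_k yK k * g <= g).
      apply: ler_sum => k _; apply: ler_wpM2l; first exact: Hy.
      by case: ifP => _; [exact: lexx | exact: ltW].
    by rewrite -mulr_suml HyK mul1r.
  by split; [exact: (Hb (fun k => (k.2 i).1)) | exact: (Hb (fun k => (k.2 i).2))].
- by rewrite !big1 ?add0r ?Hy // => k _; rewrite mulr0.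
Qed.

End App.

Theorem theorem1 (R : realType) (V : finType) (n : nat) (w : V -> V -> R)
    (C : 'I_n -> V -> R) (Sl Su : 'I_n -> nat) (gamma : gam R) :
  (2 <= n)%N ->
  (forall x y, w x y = w y x) ->
  (forall x y, 0 <= w x y) ->
  (forall i, (Sl i <= Su i)%N) ->
  (\sum_(i < n) Sl i <= #|V| <= \sum_(i < n) Su i)%N ->
  (forall g, gamma = gFin g -> 0 < g) ->
  exists u : 'I_n -> V -> R,
    [/\ primal_feasible Sl Su gamma u,
        (forall v, primal_feasible Sl Su gamma v ->
           primal_energy w C Sl Su gamma u <= primal_energy w C Sl Su gamma v),
        (forall q rho1 rho2, dual_feasible gamma q rho1 rho2 ->
           dual_value w C Sl Su q rho1 rho2 <= primal_energy w C Sl Su gamma u) &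
        (forall eps : R, 0 < eps -> exists q rho1 rho2,
           dual_feasible gamma q rho1 rho2 /\
           primal_energy w C Sl Su gamma u - eps < dual_value w C Sl Su q rho1 rho2)].
Proof.
move=> H2 Hsym Hpos HS Hsz Hg.
have Hn : (0 < n)%N by apply: leq_trans H2.
exact: (@main R V n w C Sl Su gamma Hsym Hpos HS Hg Hn Hsz).
Qed.
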